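(* Let $G$ be a finite graph, let $L=\{L_v\subset \mathbb{R}:v\in V(G)\}$ be an assignment of finite lists of real numbers to the vertices of $G$, and suppose that $f:V(G)\to \mathbb{Z}$ satisfies $f(v)<|L_v|$ for every $v\in V(G)$ and $\sum_{v\in V(G)} f(v)=|E(G)|-1$. If $G$ is not $L$-colorable, then for every color $c\in\mathbb{R}$, $$\sum_{z\in V(G)} [x^{f+1_z}]\,P_G\cdot \chi_{L,c}(z) = 0.$$
   Context: An $L$-coloring of $G$ is a function $\varphi\in\prod_{v\in V(G)}L_v$ (i.e. $\varphi(v)\in L_v$ for all $v$) with $\varphi(u)\neq\varphi(v)$ for every edge $uv\in E(G)$; $G$ is $L$-colorable if an $L$-coloring exists. The graph polynomial $P_G$ is the polynomial in variables $x_v$ ($v\in V(G)$) defined by fixing an orientation $\vec G$ of $G$ and setting $P_G=\prod_{(u,v)\in E(\vec G)}(x_v-x_u)$; it is determined up to sign by $G$. For a function $g:V(G)\to\mathbb{Z}$ with nonnegative values, $x^g=\prod_{v\in V(G)}x_v^{g(v)}$, and $[x^g]\,q$ denotes the coefficient of the monomial $x^g$ in a polynomial $q$ (taken to be $0$ if $g$ has a negative value). For $z\in V(G)$, $1_z:V(G)\to\{0,1\}$ is the function with $1_z(z)=1$ and $1_z(u)=0$ for $u\neq z$. For a color $c$, the characteristic vector $\chi_{L,c}:V(G)\to\{0,1\}$ is defined by $\chi_{L,c}(v)=1$ if $c\in L_v$ and $\chi_{L,c}(v)=0$ otherwise. *)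

(* Defs.v *)
From HB Require Import structures.
From mathcomp Require Import all_boot all_order all_algebra.
From mathcomp Require Import finmap.
From mathcomp Require Import mpoly.
From mathcomp Require Import reals.

Set Implicit Arguments.
Unset Strict Implicit.
Unset Printing Implicit Defensive.

Import Order.TTheory GRing.Theory Num.Theory.
Local Open Scope ring_scope.
Local Open Scope fset_scope.

Definition simple_graph (n : nat) (e : rel 'I_n) : Prop :=
  ssrbool.symmetric e /\ ssrbool.irreflexive e.

Definition edges (n : nat) (e : rel 'I_n) : {set 'I_n * 'I_n} :=
  [set p : 'I_n * 'I_n | (p.1 < p.2)%N && e p.1 p.2].

(* Graph polynomial, for the orientation u -> v whenever u < v. *)
Definition graph_poly (n : nat) (e : rel 'I_n) : {mpoly int[n]} :=
  \prod_(p in edges e) ('X_p.2 - 'X_p.1).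

(* [x^g] q for g : V -> int, taken to be 0 if g has a negative value. *)
Definition coef_int (n : nat) (g : 'I_n -> int) (q : {mpoly int[n]}) : int :=
  if [forall v, (0 <= g v)%R]
  then q@_[multinom [tuple (absz (g i)) | i < n]]
  else 0.

Definition ind1 (n : nat) (z : 'I_n) : 'I_n -> int :=
  fun u => (u == z)%:R.

Definition is_L_coloring (R : realType) (n : nat) (e : rel 'I_n)
    (L : 'I_n -> {fset R}) (phi : 'I_n -> R) : Prop :=
  (forall v, phi v \in L v) /\ (forall u v, e u v -> phi u != phi v).

Definition L_colorable (R : realType) (n : nat) (e : rel 'I_n)
    (L : 'I_n -> {fset R}) : Prop :=
  exists phi : 'I_n -> R, is_L_coloring e L phi.

Definition chi (R : realType) (n : nat) (L : 'I_n -> {fset R}) (c : R)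
    : 'I_n -> int :=
  fun v => (c \in L v)%:R.

(* Main.v *)
Require Import Defs.
From HB Require Import structures.
From mathcomp Require Import all_boot all_order all_algebra.
From mathcomp Require Import finmap.
From mathcomp Require Import mpoly.
From mathcomp Require Import reals.
From mathcomp Require Import ring lra zify.
Import Order.TTheory GRing.Theory Num.Theory.
Set Implicit Arguments.
Unset Strict Implicit.
Unset Printing Implicit Defensive.
Local Open Scope ring_scope.

Section Univ.
Variable K : fieldType.
Implicit Types (s : seq K) (x y : K).

Definition wt s x : K := (\prod_(b <- s | b != x) (x - b))^-1.
Definition lam s (m : nat) : K := \sum_(x <- s) x ^+ m * wt s x.

Lemma wt_notin s x : x \notin s -> wt s x = (\prod_(b <- s) (x - b))^-1.
Proof.
move=> xs; rewrite /wt big_seq_cond [X in _ = X^-1]big_seq_cond.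
by congr (_^-1); apply: eq_bigl => b; case: (boolP (b \in s)) => //= bs; apply/negP => /eqP E; rewrite -E bs in xs.
Qed.

Lemma prod_neq0 s x : x \notin s -> \prod_(b <- s) (x - b) != 0.
Proof.
move=> xs; rewrite prodf_seq_neq0; apply/allP => b bs /=.
by rewrite subr_eq0; apply: contraNneq xs => ->.
Qed.

Lemma wt_cons_other s x a : a != x -> wt (x :: s) a = (a - x)^-1 * wt s a.
Proof. by move=> ax; rewrite /wt big_cons eq_sym ax invfM. Qed.

Lemma wt_cons_self s x : wt (x :: s) x = wt s x.
Proof. by rewrite /wt big_cons eqxx. Qed.

Lemma lam_cons1 x s m : uniq (x :: s) ->
  lam (x :: s) m.+1 = x * lam (x :: s) m + lam s m.
Proof.
case/andP=> xs us; rewrite /lam !big_cons wt_cons_self mulrDr -addrA exprS mulrA.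
congr (_ + _); rewrite mulr_sumr -big_split /= big_seq [RHS]big_seq.
apply: eq_bigr => a as_; have ax : a != x by apply: contraNneq xs => <-.
rewrite wt_cons_other // exprS.
have h : a - x != 0 by rewrite subr_eq0.
field; exact: h.
Qed.

Lemma lam_cons2 x y s m : uniq (x :: y :: s) ->
  lam (x :: y :: s) m = (lam (x :: s) m - lam (y :: s) m) / (x - y).
Proof.
rewrite /= inE negb_or => /andP[/andP[xy xs] /andP[ys us]].
have yx : y != x by rewrite eq_sym.
have E1 : wt (x :: y :: s) x = (x - y)^-1 * wt s x.
  by rewrite wt_cons_self wt_cons_other.
have E2 : wt (x :: y :: s) y = (y - x)^-1 * wt s y.
  by rewrite wt_cons_other // wt_cons_self.
rewrite /lam !big_cons E1 E2 !wt_cons_self.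
have hxy : x - y != 0 by rewrite subr_eq0.
have hyx : y - x != 0 by rewrite subr_eq0.
set S := \sum_(j <- s) j ^+ m * wt [:: x, y & s] j.
set Sx := \sum_(j <- s) j ^+ m * wt (x :: s) j.
set Sy := \sum_(j <- s) j ^+ m * wt (y :: s) j.
have -> : S = (Sx - Sy) / (x - y).
  rewrite /S /Sx /Sy -sumrB mulr_suml big_seq [RHS]big_seq.
  apply: eq_bigr => a as_.
  have ax : a != x by apply: contraNneq xs => <-.
  have ay : a != y by apply: contraNneq ys => <-.
  rewrite !wt_cons_other //.
  have h1 : a - x != 0 by rewrite subr_eq0.
  have h2 : a - y != 0 by rewrite subr_eq0.
  field. by rewrite h1 h2 hxy.
field; by rewrite hxy hyx.
Qed.

Lemma lam_main k : forall s, uniq s -> size s = k ->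
  [/\ (forall m, (m.+1 < k)%N -> lam s m = 0),
      (forall m, m.+1 = k -> lam s m = 1) &
      lam s k = \sum_(x <- s) x].
Proof.
elim/ltn_ind: k => k IH s us sk.
case: s us sk => [|x [|y t]] us sk.
- rewrite /= in sk; subst k; split => //.
  by rewrite /lam !big_nil.
- rewrite /= in sk; subst k; split => [m //|m [->]|].
  + by rewrite /lam big_cons big_nil wt_cons_self /wt big_nil invr1 expr0 mulr1 addr0.
  + by rewrite /lam big_cons big_nil wt_cons_self /wt big_nil invr1 expr1 mulr1 addr0 big_cons big_nil addr0.
- rewrite /= in sk; subst k.
  have uxt : uniq (x :: t) by move: us => /= /andP[]; rewrite inE negb_or => /andP[_ ->] /andP[_ ->].
  have uyt : uniq (y :: t) by move: us => /= /andP[_ ->].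
  have [Ax Bx Cx] := IH (size t).+1 (ltnSn _) (x :: t) uxt erefl.
  have [Ay By Cy] := IH (size t).+1 (ltnSn _) (y :: t) uyt erefl.
  have xy : x - y != 0.
    by move: us => /= /andP[]; rewrite inE negb_or subr_eq0 => /andP[-> _].
  have P2 : forall m, (m.+1 < (size t).+3)%N -> lam [:: x, y & t] m = (m.+1 == (size t).+2)%:R.
    move=> m hm; rewrite lam_cons2 //.
    case: (ltngtP m.+1 (size t).+1) => h.
    + rewrite Ax // Ay // subrr mul0r.
      by rewrite ltn_eqF // (ltn_trans h).
    + have hm' : m = (size t).+1 by lia.
      rewrite hm' Cx Cy !big_cons eqxx.
      by rewrite opprD addrACA subrr addr0 divff.
    + rewrite Bx // By // subrr mul0r h.
      by rewrite ltn_eqF.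
  split.
  + move=> m hm; rewrite P2; last by lia.
    by rewrite ltn_eqF.
  + by move=> m hm; rewrite P2 ?hm ?eqxx //; lia.
  + rewrite lam_cons1 // P2 // eqxx mulr1 Cy. by rewrite [in RHS]big_cons.
Qed.
End Univ.

Section Grid.
Variable K : fieldType.
Variable n : nat.

Lemma grid_prod (s : 'I_n -> seq K) (G : 'I_n -> K -> K) M
  (HM : forall i, (size (s i) <= M)%N) :
  \sum_(F in family (fun i => [pred j : 'I_M | (j < size (s i))%N]))
     \prod_i G i (nth 0 (s i) (F i)) = \prod_i \sum_(x <- s i) G i x.
Proof.
have E : forall i, \sum_(x <- s i) G i x =
    \sum_(j : 'I_M | (j < size (s i))%N) G i (nth 0 (s i) j).
  move=> i; rewrite (big_nth 0) big_mkord (big_ord_widen M (fun j => G i (nth 0 (s i) j)) (HM i)).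
  by apply: eq_bigl.
under [RHS]eq_bigr => i _ do rewrite E.
by rewrite bigA_distr_big_dep.
Qed.

Lemma grid_main (s : 'I_n -> seq K) (P : {mpoly K[n]})
  (Hvan : forall a : 'I_n -> K, (forall i, a i \in s i) -> P.@[a] = 0) :
  \sum_(m <- msupp P) P@_m * \prod_i lam (s i) (m i) = 0.
Proof.
have [M HM] : exists M, forall i, (size (s i) <= M)%N.
  by exists (\max_i size (s i))%N => i; apply: (leq_bigmax i).
pose Q := (fun i => [pred j : 'I_M | (j < size (s i))%N]).
have H0 : \sum_(F in family Q)
   (\prod_i wt (s i) (nth 0 (s i) (F i))) * P.@[fun i => nth 0 (s i) (F i)] = 0.
  apply: big1 => F /familyP FQ; rewrite Hvan ?mulr0 // => i.
  by apply: mem_nth; apply: FQ.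
rewrite -[X in _ = X]H0.
transitivity (\sum_(F in family Q) \sum_(m <- msupp P)
   (\prod_i wt (s i) (nth 0 (s i) (F i))) *
   (P@_m * \prod_i (nth 0 (s i) (F i)) ^+ m i)); last first.
  by apply: eq_bigr => F _; rewrite mevalE mulr_sumr.
rewrite exchange_big /=; apply: eq_bigr => m _.
rewrite /lam -(@grid_prod s _ M HM) mulr_sumr; apply: eq_bigr => F _.
rewrite mulrCA -big_split /=; congr (_ * _); apply: eq_bigr => i _.
by rewrite mulrC.
Qed.
End Grid.

Section Cors.
Variable K : fieldType.
Variable n : nat.

Lemma coef_ext (P : {mpoly K[n]}) m0 :
  \sum_(m <- msupp P) P@_m * (m == m0)%:R = P@_m0.
Proof.
rewrite [in RHS](mpolyE P) raddf_sum /=; apply: eq_bigr => m _.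
by rewrite mcoeffZ mcoeffX.
Qed.

Lemma cor2 (P : {mpoly K[n]}) (s : 'I_n -> seq K) (g : 'I_n -> nat) :
  (forall i, uniq (s i)) -> (forall i, size (s i) = (g i).+1) ->
  P \is (\sum_i g i)%N.-homog ->
  (forall a : 'I_n -> K, (forall i, a i \in s i) -> P.@[a] = 0) ->
  P@_[multinom g i | i < n] = 0.
Proof.
move=> us ss hP Hvan; rewrite -[RHS](grid_main Hvan) -coef_ext; apply: eq_big_seq => m mP; congr (_ * _).
have dm : mdeg m = _ := dhomog_mf hP mP; rewrite mdegE in dm.
case: (boolP [forall i, g i <= m i])%N => [/forallP ge|].
  have E : m = [multinom g i | i < n].
    apply/mnmP => i; rewrite mnmE.
    have : (\sum_i (m i - g i) == 0)%N by rewrite sumnB // dm subnn.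
    rewrite sum_nat_eq0 => /forallP /(_ i) /=; rewrite subn_eq0 => le.
    by apply/eqP; rewrite eqn_leq le ge.
  rewrite E eqxx; symmetry; apply: big1 => i _; rewrite mnmE.
  by case: (lam_main (us i) (ss i)) => _ B _; apply: B.
move=> /forallPn [i]; rewrite -ltnNge => lt.
have -> : (m == [multinom g i | i < n]) = false.
  by apply/negbTE; apply/eqP => E; move: lt; rewrite E mnmE ltnn.
rewrite (bigD1 i) //=.
by case: (lam_main (us i) (ss i)) => A _ _; rewrite A ?mul0r.
Qed.

Definition mfz (f : 'I_n -> nat) (z : 'I_n) : 'X_{1..n} :=
  [multinom (f i + (i == z))%N | i < n].

Lemma mfz_inj f z z' : (mfz f z == mfz f z') = (z == z').
Proof.
apply/eqP/eqP => [E|->] //.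
have := congr1 (fun m : 'X_{1..n} => m z) E; rewrite /mfz !mnmE eqxx.
by move=> /eqP; rewrite eqn_add2l eq_sym eqb1 => /eqP.
Qed.

Lemma cor1 (P : {mpoly K[n]}) (s : 'I_n -> seq K) (f : 'I_n -> nat) :
  (forall i, uniq (s i)) -> (forall i, size (s i) = (f i).+1) ->
  P \is (\sum_i f i).+1.-homog ->
  (forall a : 'I_n -> K, (forall i, a i \in s i) -> P.@[a] = 0) ->
  \sum_z P@_(mfz f z) * \sum_(x <- s z) x = 0.
Proof.
move=> us ss hP Hvan; rewrite -[RHS](grid_main Hvan).
transitivity (\sum_(m <- msupp P) P@_m *
   \sum_z (m == mfz f z)%:R * \sum_(x <- s z) x); last first.
  apply: eq_big_seq => m mP; congr (_ * _).
  have dm : mdeg m = _ := dhomog_mf hP mP; rewrite mdegE in dm.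
  case: (boolP [forall i, f i <= m i])%N => [/forallP ge|].
    have : (\sum_i (m i - f i) == 1)%N by rewrite sumnB // dm subSnn.
    move=> /sum_nat_eq1 [z [_ d1 d0]].
    have E : m = mfz f z.
      apply/mnmP => i; rewrite /mfz mnmE.
      case: (eqVneq i z) => [->|iz].
        by rewrite addn1; have := ge z; lia.
      have := d0 i iz isT; move/eqP; rewrite subn_eq0 => le.
      by rewrite addn0; apply/eqP; rewrite eqn_leq le ge.
    have R1 : \sum_z' (m == mfz f z')%:R * \sum_(x <- s z') x = \sum_(x <- s z) x.
      rewrite (bigD1 z) //= E eqxx mul1r [X in _ + X]big1 ?addr0 //.
      by move=> z' z'z; rewrite mfz_inj eq_sym (negPf z'z) mul0r.
    rewrite R1 (bigD1 z) //= [X in _ * X]big1 ?mulr1.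
      by rewrite E /mfz mnmE eqxx addn1; case: (lam_main (us z) (ss z)) => _ _ ->.
    move=> i iz; rewrite E /mfz mnmE (negPf iz) addn0.
    by case: (lam_main (us i) (ss i)) => _ B _; apply: B.
  move=> /forallPn [i]; rewrite -ltnNge => lt.
  rewrite big1; last first.
    move=> z _; have -> : (m == mfz f z) = false.
      apply/negbTE; apply/eqP => E; move: lt; rewrite E /mfz mnmE.
      by rewrite ltnNge leq_addr.
    by rewrite mul0r.
  rewrite (bigD1 i) //=.
  by case: (lam_main (us i) (ss i)) => A _ _; rewrite A ?mul0r.
symmetry; under eq_bigr => m _ do rewrite mulr_sumr.
rewrite exchange_big /=; apply: eq_bigr => z _.
rewrite -coef_ext mulr_suml; apply: eq_bigr => m _.
by rewrite mulrA.
Qed.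
End Cors.

Section Graph.
Variable R : realType.
Variable n : nat.
Variable e : rel 'I_n.

Definition gpR : {mpoly R[n]} := \prod_(p in edges e) ('X_p.2 - 'X_p.1).

Lemma gpR_coef m : gpR@_m = ((graph_poly e)@_m)%:~R.
Proof.
have -> : gpR = map_mpoly (intr : int -> R) (graph_poly e).
  rewrite /gpR /graph_poly rmorph_prod; apply: eq_bigr => p _.
  by rewrite rmorphB /= !map_mpolyX.
by rewrite mcoeff_map_mpoly.
Qed.

Lemma gpR_homog : gpR \is (#|edges e|).-homog.
Proof.
rewrite /gpR -big_enum /= cardE.
elim: (enum (edges e)) => [|p r IH]; first by rewrite big_nil; apply: dhomog1.
rewrite big_cons /= -add1n; apply: dhomogM => //.
by apply: rpredB; rewrite dhomogX; apply/eqP; apply: mdeg1.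
Qed.

Lemma gpR_van (a : 'I_n -> R) : simple_graph e ->
  (exists u v, e u v /\ a u = a v) -> gpR.@[a] = 0.
Proof.
move=> [sym irr] [u [v [euv auv]]].
have uv : u != v by apply: contraTneq euv => ->; rewrite irr.
have [p [pE pa]] : exists p, p \in edges e /\ a p.1 = a p.2.
  case: (ltngtP u v) => h.
  - by exists (u, v); rewrite inE /= h euv.
  - by exists (v, u); rewrite inE /= h sym euv.
  - by move: uv; rewrite (val_inj h) eqxx.
rewrite /gpR rmorph_prod (bigD1 p) //= rmorphB /= !mevalXU pa subrr mul0r //.
Qed.

Lemma noncol_van (L : 'I_n -> {fset R}) (s : 'I_n -> seq R) :
  ~ L_colorable e L -> (forall i, {subset s i <= L i}) ->
  forall a : 'I_n -> R, (forall i, a i \in s i) ->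
  exists u v, e u v /\ a u = a v.
Proof.
move=> nc sub a ha.
case: (boolP [exists u, [exists v, e u v && (a u == a v)]]).
  by move=> /existsP[u /existsP[v /andP[euv /eqP auv]]]; exists u, v.
move=> H; exfalso; apply: nc; exists a; split => [v|u v euv].
  exact: sub (ha v).
move/existsPn: H => /(_ u) /existsPn /(_ v).
by rewrite euv.
Qed.

End Graph.

Lemma sum_map_psi (R : realType) (c d : R) (s : seq R) : uniq s ->
  \sum_(x <- map (fun x => if x == c then d else x) s) x =
  \sum_(x <- s) x + (c \in s)%:R * (d - c).
Proof.
elim: s => [|x s IH] /=; first by rewrite !big_nil mul0r addr0.
move=> /andP[xs us]; rewrite !big_cons IH // inE.
case: (eqVneq x c) => [<-|xc].
  by rewrite (negPf xs) /= mul0r addr0 mul1r; lra.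
by rewrite /=; lra.
Qed.

Theorem theorem5 (R : realType) (n : nat) (e : rel 'I_n)
    (L : 'I_n -> {fset R}) (f : 'I_n -> int) :
  simple_graph e ->
  (forall v, f v < (#|` L v|)%:Z) ->
  \sum_(v < n) f v = (#|edges e|)%:Z - 1 ->
  ~ L_colorable e L ->
  forall c : R,
    \sum_(z < n) coef_int (fun u => f u + ind1 z u) (graph_poly e) * chi L c z
    = 0.
Proof.
move=> sg hf hs nc c.
have Z : forall h : 'I_n -> int, (forall v, h v < (#|` L v|)%:Z) ->
    \sum_v h v = (#|edges e|)%:Z -> coef_int h (graph_poly e) = 0.
  move=> h hh hsum; rewrite /coef_int; case: ifP => // /forallP h0.
  pose g v := absz (h v).
  have hg : forall v, h v = (g v)%:Z by move=> v; rewrite /g abszE ger0_norm.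
  have gL : forall v, (g v < #|` L v|)%N by move=> v; have := hh v; rewrite hg ltz_nat.
  pose s v := take (g v).+1 (enum_fset (L v)).
  suff C : (gpR R e)@_[multinom g i | i < n] = 0.
    by move: C; rewrite gpR_coef => /eqP; rewrite intr_eq0 => /eqP.
  apply: (@cor2 R n (gpR R e) s g).
  - by move=> v; apply: take_uniq; apply: fset_uniq.
  - by move=> v; apply: size_takel.
  - have -> : (\sum_i g i)%N = #|edges e|.
      apply/eqP; rewrite -eqz_nat -hsum (big_morph Posz PoszD (erefl _)).
      by apply/eqP; apply: eq_bigr => v _; rewrite -hg.
    exact: gpR_homog.
  - move=> a ha; apply: gpR_van sg _; apply: (noncol_van nc _ ha).
    by move=> i x /mem_take.
case: (boolP [exists v, f v < -1]) => [/existsP[v fv]|].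
  apply: big1 => z _; rewrite /coef_int; case: ifP => [/forallP/(_ v)|]; last by rewrite mul0r.
  by rewrite /ind1; case: (v == z) => /= h; exfalso; lia.
move=> /existsPn fge.
have fge' : forall v, -1 <= f v by move=> v; have := fge v; rewrite -leNgt.
have sumind : forall v : 'I_n, \sum_(u < n) ind1 v u = 1.
  move=> v; rewrite (bigD1 v) //= big1 ?addr0 /ind1 ?eqxx //.
  by move=> u uv; rewrite (negPf uv).
case: (boolP [exists v, f v == -1]) => [/existsP[v /eqP fv]|].
  rewrite (bigD1 v) //= big1 ?addr0.
    rewrite /chi; case: (boolP (c \in L v)) => cv; last by rewrite mulr0.
    rewrite Z ?mul0r //.
      move=> u; rewrite /ind1; case: (eqVneq u v) => [->|uv].
        rewrite fv /= addNr ltz_nat lt0n size_eq0.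
        by apply: contraTneq cv => E; rewrite -[c \in L v]/(c \in enum_fset (L v)) E.
      by rewrite /= addr0.
    by rewrite big_split /= hs sumind subrK.
  move=> z zv; rewrite /coef_int; case: ifP => [/forallP/(_ v)|]; last by rewrite mul0r.
  by rewrite /ind1 eq_sym (negPf zv) fv.
move=> /existsPn fne.
have f0 : forall v, 0 <= f v.
  by move=> v; have := fge' v; have := fne v; move=> /eqP h1 h2; lia.
pose fn v := absz (f v).
have hfn : forall v, f v = (fn v)%:Z by move=> v; rewrite /fn abszE ger0_norm.
have fnL : forall v, (fn v < #|` L v|)%N by move=> v; have := hf v; rewrite hfn ltz_nat.
pose s v := take (fn v).+1 (enum_fset (L v)).
have coefE : forall z, coef_int (fun u => f u + ind1 z u) (graph_poly e)
    = (graph_poly e)@_(mfz fn z).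
  move=> z; rewrite /coef_int.
  have -> : [forall v, 0 <= f v + ind1 z v].
    by apply/forallP => v; rewrite /ind1; apply: addr_ge0 => //; case: (v == z).
  congr (_ @_ _); apply/mnmP => i; rewrite /mfz !mnmE hfn /ind1.
  by case: (i == z).
have term : forall z, coef_int (fun u => f u + ind1 z u) (graph_poly e) * chi L c z
    = (graph_poly e)@_(mfz fn z) * (c \in s z)%:R.
  move=> z; case: (ltnP (fn z).+1 #|` L z|) => h.
    rewrite -coefE Z ?mul0r //.
      move=> u; rewrite /ind1; case: (eqVneq u z) => [->|uz].
        by rewrite hfn /= -[1]/(Posz 1) -PoszD ltz_nat addn1.
      by rewrite /= addr0.
    by rewrite big_split /= hs sumind subrK.
  by rewrite coefE /chi /s take_oversize.
rewrite (eq_bigr _ (fun z _ => term z)).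
apply/eqP; rewrite -(intr_eq0 R) rmorph_sum /=.
have -> : \sum_(i < n) ((graph_poly e)@_(mfz fn i) * (c \in s i)%:R)%:~R
    = \sum_(i < n) (gpR R e)@_(mfz fn i) * (c \in s i)%:R :> R.
  by apply: eq_bigr => z _; rewrite rmorphM /= gpR_coef rmorph_nat.
pose d : R := 1 + `|c| + \sum_(i < n) \sum_(x <- enum_fset (L i)) `|x|.
have Sge0 : forall i : 'I_n, 0 <= \sum_(x <- enum_fset (L i)) `|x| :> R.
  by move=> i; apply: sumr_ge0 => x _.
have dL : forall i x, x \in L i -> x < d.
  move=> i x xL; rewrite /d.
  have h1 : `|x| <= \sum_(x <- enum_fset (L i)) `|x| :> R.
    rewrite (bigD1_seq x xL (fset_uniq _)) /=.
    by rewrite lerDl; apply: sumr_ge0 => y _.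
  have h2 : \sum_(x <- enum_fset (L i)) `|x| <= \sum_(i < n) \sum_(x <- enum_fset (L i)) `|x| :> R.
    by rewrite (bigD1 i) //= lerDl; apply: sumr_ge0 => j _.
  have h3 := ler_norm x; have h4 : 0 <= `|c| by [].
  lra.
have dc : c < d.
  rewrite /d; have h1 := ler_norm c.
  have h2 : 0 <= \sum_(i < n) \sum_(x <- enum_fset (L i)) `|x| :> R.
    by apply: sumr_ge0.
  lra.
pose psi x := if x == c then d else x.
pose s' v := map psi (s v).
have us : forall v, uniq (s v) by move=> v; apply: take_uniq; apply: fset_uniq.
have ss : forall v, size (s v) = (fn v).+1 by move=> v; apply: size_takel.
have sL : forall v, {subset s v <= L v} by move=> v x /mem_take.
have us' : forall v, uniq (s' v).
  move=> v; rewrite map_inj_in_uniq // => x y xs ys; rewrite /psi.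
  have xd := dL _ _ (sL _ _ xs); have yd := dL _ _ (sL _ _ ys).
  case: (eqVneq x c) => [->|xc]; case: (eqVneq y c) => [->|yc] //.
  - by move=> E; move: yd; rewrite -E ltxx.
  - by move=> E; move: xd; rewrite E ltxx.
have ss' : forall v, size (s' v) = (fn v).+1 by move=> v; rewrite size_map.
have hom : gpR R e \is (\sum_i fn i).+1.-homog.
  have -> : (\sum_i fn i).+1 = #|edges e|.
    apply/eqP; rewrite -eqz_nat.
    have : \sum_(v < n) f v = (\sum_i fn i)%N :> int.
      rewrite (big_morph Posz PoszD (erefl _)).
      by apply: eq_bigr => v _; rewrite -hfn.
    rewrite hs => h; apply/eqP; lia.
  exact: gpR_homog.
have C1 := cor1 us ss hom.
have C2 := cor1 us' ss' hom.
have V1 : forall a : 'I_n -> R, (forall i, a i \in s i) -> (gpR R e).@[a] = 0.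
  move=> a ha; apply: gpR_van sg _; exact: (noncol_van nc sL ha).
have V2 : forall a : 'I_n -> R, (forall i, a i \in s' i) -> (gpR R e).@[a] = 0.
  move=> a ha; apply: gpR_van sg _.
  pose phi i := if a i == d then c else a i.
  have hphi : forall i, phi i \in s i /\ a i = psi (phi i).
    move=> i; have /mapP [x xs ax] := ha i.
    have xd := dL _ _ (sL _ _ xs).
    case: (eqVneq x c) => [xc|xc].
      have ad : a i = d by rewrite ax /psi xc eqxx.
      rewrite /phi ad eqxx; split; first by rewrite -xc.
      by rewrite /psi eqxx.
    have ax' : a i = x by rewrite ax /psi (negPf xc).
    rewrite /phi ax' (lt_eqF xd); split => //.
    by rewrite /psi (negPf xc).
  have [u [v [euv E]]] := noncol_van nc sL (fun i => (hphi i).1).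
  by exists u, v; split => //; rewrite (hphi u).2 (hphi v).2 E.
have D1 := C1 V1.
have D2 : \sum_z (gpR R e)@_(mfz fn z) *
    (\sum_(x <- s z) x + (c \in s z)%:R * (d - c)) = 0.
  apply: etrans (C2 V2); apply: eq_bigr => z _; congr (_ * _).
  by rewrite (sum_map_psi c d (us z)).
move: D2; under eq_bigr => z _ do rewrite mulrDr.
rewrite big_split /= D1 add0r.
under eq_bigr => z _ do rewrite mulrA.
rewrite -mulr_suml => /eqP; rewrite mulf_eq0 => /orP[] // /eqP h.
by exfalso; move: dc; rewrite -subr_gt0 h ltxx.
Qed.
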